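(* Let $N\ge1$, $\varphi,\gamma\in(0,1)$ with $\varphi+\gamma\ge1$. Consider one transition $\boldsymbol{x}\to Y$ on $\{0,1\}^N$ generated as follows: $Z$ is a random element of $\{0,1\}^N$ with exchangeable coordinates, $(U_k)_k$ are i.i.d. Uniform$(0,1)$ independent of $Z$, and independently for each $k$: if $Z[k]=1$, $Y[k]=1$ iff $\boldsymbol{x}[k]=0$ or ($\boldsymbol{x}[k]=1$ and $U_k\ge\bar\varphi/\gamma$); if $Z[k]=0$ and $\varphi\le\gamma$, $Y[k]=0$ iff $\boldsymbol{x}[k]=0$ or ($\boldsymbol{x}[k]=1$ and $U_k\ge\varphi/\gamma$); if $Z[k]=0$ and $\varphi>\gamma$, $Y[k]=1$ iff $\boldsymbol{x}[k]=1$ or ($\boldsymbol{x}[k]=0$ and $U_k\ge\bar\varphi/\bar\gamma$). Let $N_{0\cdot}=N-\|\boldsymbol{x}\|$, $N_{1\cdot}=\|\boldsymbol{x}\|$, $N_{01}=|\{k:\boldsymbol{x}[k]=0,Y[k]=1\}|$, $N_{11}=|\{k:\boldsymbol{x}[k]=1,Y[k]=1\}|$. Then the probability generating function $\mathbb{E}[s_{01}^{N_{01}}s_{11}^{N_{11}}\mid\|Z\|=\zeta]$, where $N=N_{0\cdot}+N_{1\cdot}$, is the coefficient of $\binom{N}{\zeta}\xi^\zeta$ in $$\begin{cases}(1+\xi s_{01})^{N_{0\cdot}}\big(1-\varphi/\gamma+s_{11}\varphi/\gamma+\xi(\bar\varphi/\gamma+s_{11}(1-\bar\varphi/\gamma))\big)^{N_{1\cdot}},&\varphi\le\gamma,\\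 \big(\bar\varphi/\bar\gamma+s_{01}(1-\bar\varphi/\bar\gamma)+\xi s_{01}\big)^{N_{0\cdot}}\big(s_{11}+\xi(\bar\varphi/\gamma+s_{11}(1-\bar\varphi/\gamma))\big)^{N_{1\cdot}},&\varphi>\gamma.\end{cases}$$
   Context: $\bar a=1-a$; $\|\boldsymbol{x}\|$ is the number of ones of $\boldsymbol{x}\in\{0,1\}^N$. This describes a transition of a time-homogeneous process with exchangeable coordinates from $X_{t-1}=\boldsymbol{x}$ to $X_t=Y$ with driving variable $Z=Z_t$. *)

(* Defs.v *)
From HB Require Import structures.
From mathcomp Require Import all_boot all_order all_algebra perm.
From mathcomp Require Import all_classical all_reals all_analysis.
Set Implicit Arguments. Unset Strict Implicit. Unset Printing Implicit Defensive.
Import Order.TTheory GRing.Theory Num.Theory.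
Local Open Scope classical_set_scope.
Local Open Scope ring_scope.

Definition ycoord (R : realType) (phi gamma : R) (z xk : bool) (u : R) : bool :=
  if z then
    (~~ xk) || (xk && ((1 - phi) / gamma <= u))
  else if phi <= gamma then
    ~~ ((~~ xk) || (xk && (phi / gamma <= u)))
  else
    xk || ((~~ xk) && ((1 - phi) / (1 - gamma) <= u)).

Definition nones (N : nat) (x : {ffun 'I_N -> bool}) : nat := #|[set k | x k]|.

Definition n01 (N : nat) (x y : {ffun 'I_N -> bool}) : nat :=
  #|[set k | ~~ x k && y k]|.
Definition n11 (N : nat) (x y : {ffun 'I_N -> bool}) : nat :=
  #|[set k | x k && y k]|.

Definition exchangeable (R : realType) (d : measure_display) (T : measurableType d)
  (P : probability T R) (N : nat) (Z : T -> {ffun 'I_N -> bool}) : Prop :=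
  forall (s : {perm 'I_N}) (z : {ffun 'I_N -> bool}),
    P [set w | Z w = z] = P [set w | Z w = [ffun k => z (s k)]].

Definition indep_Z_U (R : realType) (d : measure_display) (T : measurableType d)
  (P : probability T R) (N : nat) (Z : T -> {ffun 'I_N -> bool})
  (U : 'I_N -> T -> R) : Prop :=
  forall (z : {ffun 'I_N -> bool}) (B : 'I_N -> set R),
    (forall k, measurable (B k)) ->
    P [set w | Z w = z /\ forall k, B k (U k w)] =
    (P [set w | Z w = z] * \prod_(k < N) P (U k @^-1` B k))%E.

(* Main.v *)
Require Import Defs.
From HB Require Import structures.
From mathcomp Require Import all_boot all_order all_algebra.
From mathcomp Require Import all_classical all_reals all_analysis.
From mathcomp Require Import perm zify ring lra.
Import Order.TTheory GRing.Theory Num.Theory.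
Local Open Scope classical_set_scope.
Local Open Scope ring_scope.


Lemma int_decomp (R : realType) (d : measure_display) (T : measurableType d)
  (P : probability T R) (I : finType) (D : set T) (mD : measurable D)
  (E : I -> set T) (mE : forall i, measurable (E i)) (c : I -> R) (F : T -> R) :
  (forall w, D w -> F w = \sum_i c i * \1_(E i) w) ->
  (\int[P]_(w in D) (F w)%:E = \sum_i (c i)%:E * P (E i `&` D))%E.
Proof.
move=> HF.
have intI i : P.-integrable D (fun w => (\1_(E i) w)%:E).
  apply: (integrableS measurableT) => //; exact: integrable_indic.
transitivity (\int[P]_(w in D) \sum_i ((c i)%:E * (\1_(E i) w)%:E))%E.
  apply: eq_integral => w /[!inE] Dw; rewrite HF // sumEFin.
  by congr (_%:E); apply: eq_bigr => i _.
rewrite integral_sum //; last by move=> i; apply: integrableZl.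
apply: eq_bigr => i _; rewrite integralZl // integral_indic //.
Qed.

Lemma set_ge_itv (R : realType) (c : R) : [set u : R | c <= u] = `[c, +oo[%classic.
Proof. by apply/seteqP; split => u /=; rewrite in_itv /= andbT. Qed.

Lemma measurable_ge (R : realType) (c : R) : measurable [set u : R | c <= u].
Proof. by rewrite set_ge_itv; exact: measurable_itv. Qed.

Lemma unif_ge (R : realType) (c : R) : 0 <= c <= 1 ->
  uniform_prob (@ltr01 R) [set u | c <= u] = (1 - c)%:E.
Proof.
move=> /andP[c0 c1].
rewrite /uniform_prob integral_uniform_pdf.
have -> : [set u : R | c <= u] `&` `[0, 1]%classic = `[c, 1]%classic.
  apply/seteqP; split => u /=; rewrite !in_itv /=.
    by move=> [cu /andP[_ ->]]; rewrite cu.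
  by move=> /andP[cu u1]; split => //; rewrite u1 (le_trans c0 cu).
rewrite (eq_integral (fun=> 1%:E)); last first.
  move=> u; rewrite inE /= in_itv /= => /andP[cu u1].
  by rewrite /uniform_pdf (le_trans c0 cu) u1 subr0 invr1.
rewrite integral_cst //= lebesgue_measure_itv /= lte_fin.
case: ltgtP c1 => // [c1' _ | -> _]; first by rewrite mul1e -EFinD.
by rewrite subrr mul1e.
Qed.

Lemma measurable_bool (R : realType) (f : bool -> bool) (c : R) e :
  measurable [set u : R | f (c <= u) == e].
Proof.
case Ht: (f true == e); case Hf: (f false == e).
- rewrite (_ : [set u | _] = setT) //; apply/seteqP; split => u //= _.
  by case: (c <= u).
- rewrite (_ : [set u | _] = [set u | c <= u]); first exact: measurable_ge.
  by apply/seteqP; split => u /=; case: (c <= u); rewrite ?Ht ?Hf.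
- rewrite (_ : [set u | _] = ~` [set u | c <= u]); first by apply: measurableC; exact: measurable_ge.
  by apply/seteqP; split => u /=; case: (c <= u); rewrite ?Ht ?Hf.
- rewrite (_ : [set u | _] = set0) //; apply/seteqP; split => u //=.
  by case: (c <= u); rewrite ?Ht ?Hf.
Qed.

Lemma unif_bool (R : realType) (f : bool -> bool) (c : R) e : 0 <= c <= 1 ->
  uniform_prob (@ltr01 R) [set u : R | f (c <= u) == e] =
  ((f true == e)%:R * (1 - c) + (f false == e)%:R * c)%:E.
Proof.
move=> c01.
case Ht: (f true == e); case Hf: (f false == e).
- rewrite (_ : [set u | _] = setT); last first.
    by apply/seteqP; split => u //= _; case: (c <= u).
  by rewrite probability_setT !mul1r subrK.
- rewrite (_ : [set u | _] = [set u | c <= u]); last first.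
    by apply/seteqP; split => u /=; case: (c <= u); rewrite ?Ht ?Hf.
  by rewrite unif_ge // mul1r mul0r addr0.
- rewrite (_ : [set u | _] = ~` [set u | c <= u]); last first.
    by apply/seteqP; split => u /=; case: (c <= u); rewrite ?Ht ?Hf.
  rewrite probability_setC; last exact: measurable_ge.
  rewrite -[X in (1 - X)%E]/(uniform_prob (@ltr01 R) _) unif_ge //.
  by rewrite mul0r add0r mul1r -EFinB opprB addrC subrK.
- rewrite (_ : [set u | _] = set0); last first.
    by apply/seteqP; split => u //=; case: (c <= u); rewrite ?Ht ?Hf.
  by rewrite measure0 !mul0r addr0.
Qed.

Lemma sum_bool_card (I : finType) (p : pred I) :
  (\sum_(k : I) (p k : nat) = #|p|)%N.
Proof.
rewrite -sum1_card [RHS]big_mkcond /=; apply: eq_bigr => k _.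
by rewrite unfold_in; case: (p k).
Qed.

Lemma card_cset (I : finType) (p : pred I) : #|[set k | p k]| = #|p|.
Proof.
apply: eq_card => k; rewrite unfold_in /=.
by apply/idP/idP => [/set_mem|h] //; exact: mem_set.
Qed.

Lemma nonesE N (z : {ffun 'I_N -> bool}) :
  nones z = count id [seq z i | i <- enum 'I_N].
Proof.
rewrite /nones card_cset cardE /enum_mem size_filter count_map -enumT.
rewrite (eq_filter (a2 := predT)) ?filter_predT //.
Qed.

Lemma perm_exists N (z z' : {ffun 'I_N -> bool}) : nones z = nones z' ->
  exists s : {perm 'I_N}, z' = [ffun k => z (s k)].
Proof.
move=> hz.
have : perm_eq [tuple z' i | i < N] [tuple z i | i < N].
  apply/seq.permP => p /=.
  have cnt (y : {ffun 'I_N -> bool}) : count p [seq y i | i <- enum 'I_N] =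
     (p true * nones y + p false * (N - nones y))%N.
    rewrite nonesE; set s := [seq y i | i <- enum 'I_N].
    have hs : size s = N by rewrite size_map size_enum_ord.
    rewrite -hs -(count_predC id s).
    rewrite addKn. elim: s {hs} => [|b s IH] /=; first by rewrite !muln0.
    rewrite IH.
    by case: b; case: (p true); case: (p false) => /=; lia.
  by rewrite !cnt hz.
move/tuple_permP => [s hs]; exists s; apply/ffunP => k.
have ht : [tuple z' i | i < N] = [tuple tnth [tuple z i0 | i0 < N] (s i) | i < N] := val_inj hs.
have := congr1 (fun t : N.-tuple bool => tnth t k) ht.
by rewrite /= !tnth_mktuple ffunE.
Qed.


Lemma nones_card N (z : {ffun 'I_N -> bool}) : nones z = #|[pred k | z k]|.
Proof. by rewrite /nones card_cset. Qed.

Lemma card_nones N m :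
  (\sum_(z : {ffun 'I_N -> bool} | nones z == m) 1)%N = 'C(N, m).
Proof.
pose h (A : {set 'I_N}) : {ffun 'I_N -> bool} := [ffun k => k \in A].
pose g (z : {ffun 'I_N -> bool}) : {set 'I_N} := finset (fun k => z k).
rewrite (reindex h); last first.
  exists g => [A _ | z _].
    by apply/setP => k; rewrite finset.in_set ffunE.
  by apply/ffunP => k; rewrite ffunE finset.in_set.
rewrite sum1_card -[in RHS](card_ord N) -card_draws.
apply: eq_card => A; rewrite finset.in_set unfold_in /= nones_card.
congr (_ == m); apply: eq_card => k; by rewrite unfold_in /= ffunE.
Qed.

Lemma coef_prod_lin (R : realType) N (a b : 'I_N -> R) m :
  (\prod_(k < N) ((a k)%:P + 'X * (b k)%:P))`_m =
  \sum_(z : {ffun 'I_N -> bool} | nones z == m) \prod_k (if z k then b k else a k).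
Proof.
have -> : \prod_(k < N) ((a k)%:P + 'X * (b k)%:P) = (\prod_(k < N) \sum_(j : bool) ((if j then b k else a k)%:P * 'X^j)).
  apply: eq_bigr => k _; rewrite big_bool /= expr1 expr0 mulr1.
  by rewrite addrC mulrC.
rewrite bigA_distr_bigA coef_sum [RHS]big_mkcond; apply: eq_bigr => z _ /=.
rewrite big_split /= prodrXr -rmorph_prod /= coefCM coefXn sum_bool_card -nones_card.
by rewrite eq_sym; case: (nones z == m); rewrite ?mulr1 ?mulr0.
Qed.

Definition cth {R : realType} (phi gamma : R) (b : bool) : R :=
  if b then (1 - phi) / gamma
  else if phi <= gamma then phi / gamma else (1 - phi) / (1 - gamma).

Definition yf {R : realType} (phi gamma : R) (b xk t : bool) : bool :=
  if b then (~~ xk) || (xk && t)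
  else if phi <= gamma then ~~ ((~~ xk) || (xk && t))
  else xk || ((~~ xk) && t).

Definition qv {R : realType} (phi gamma : R) (b xk e : bool) : R :=
  (yf phi gamma b xk true == e)%:R * (1 - cth phi gamma b) +
  (yf phi gamma b xk false == e)%:R * cth phi gamma b.

Definition vv {R : realType} (s01 s11 : R) (xk j : bool) : R :=
  s01 ^+ (~~ xk && j) * s11 ^+ (xk && j).

Lemma ycoordE (R : realType) (phi gamma : R) b xk u :
  ycoord phi gamma b xk u = yf phi gamma b xk (cth phi gamma b <= u).
Proof. by rewrite /ycoord /yf /cth; case: b => //; case: ifP. Qed.

Lemma cth01 (R : realType) (phi gamma : R) b :
  0 < phi < 1 -> 0 < gamma < 1 -> 1 <= phi + gamma -> 0 <= cth phi gamma b <= 1.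
Proof.
move=> /andP[p0 p1] /andP[g0 g1] pg; rewrite /cth.
case: b; last case: ifP => hle; apply/andP; split.
- apply: divr_ge0; lra.
- rewrite ler_pdivrMr // mul1r; lra.
- apply: divr_ge0; lra.
- by rewrite ler_pdivrMr // mul1r.
- have g1' : 0 < 1 - gamma by rewrite subr_gt0.
  apply: divr_ge0; lra.
- have g1' : 0 < 1 - gamma by rewrite subr_gt0.
  rewrite ler_pdivrMr // mul1r.
  move/negbT: hle; rewrite -ltNge => /ltW; lra.
Qed.

Lemma G_prod (R : realType) (s01 s11 : R) N (x y : {ffun 'I_N -> bool}) :
  s01 ^+ n01 x y * s11 ^+ n11 x y = \prod_k vv s01 s11 (x k) (y k).
Proof.
rewrite /vv big_split /= !prodrXr !sum_bool_card /n01 /n11 !card_cset.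
by [].
Qed.

Lemma prod_if (R : comPzRingType) N (x : {ffun 'I_N -> bool}) (L1 L0 : R) :
  \prod_(k < N) (if x k then L1 else L0) = L0 ^+ (N - nones x) * L1 ^+ nones x.
Proof.
have -> : \prod_(k < N) (if x k then L1 else L0) =
          \prod_(k < N) (L1 ^+ (x k) * L0 ^+ (~~ x k)).
  by apply: eq_bigr => k _; case: (x k); rewrite ?expr1 ?expr0 ?mulr1 ?mul1r.
rewrite big_split /= !prodrXr !sum_bool_card nones_card mulrC; congr (_ ^+ _ * _).
have hc := cardC [pred k : 'I_N | x k]; rewrite card_ord in hc.
have hb : #|(fun k => ~~ x k)| = #|[predC [pred k : 'I_N | x k]]|.
  by apply: eq_card => k; rewrite !unfold_in.
have aux (a b n : nat) : (a + b = n -> b = n - a)%N by move=> <-; rewrite addKn.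
rewrite hb; exact: aux hc.
Qed.

Theorem corollary6 (R : realType) (d : measure_display) (T : measurableType d)
  (P : probability T R) (N : nat) (phi gamma : R)
  (Z : T -> {ffun 'I_N -> bool}) (U : 'I_N -> T -> R)
  (x : {ffun 'I_N -> bool}) (s01 s11 : R) (zeta : nat) :
  (0 < N)%N ->
  0 < phi < 1 -> 0 < gamma < 1 -> 1 <= phi + gamma ->
  (forall z, measurable [set w | Z w = z]) ->
  (forall k, measurable_fun setT (U k)) ->
  exchangeable P Z ->
  (forall k (B : set R), measurable B -> P (U k @^-1` B) = uniform_prob (@ltr01 R) B) ->
  indep_Z_U P Z U ->
  (0 < P [set w | nones (Z w) = zeta])%E ->
  let Y := fun w => [ffun k => ycoord phi gamma (Z w k) (x k) (U k w)] in
  let N0 := (N - nones x)%N in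
  let N1 := nones x in
  let gf : {poly R} :=
    if phi <= gamma then
      (1 + 'X * s01%:P) ^+ N0 *
      ((1 - phi / gamma + s11 * (phi / gamma))%:P
       + 'X * ((1 - phi) / gamma + s11 * (1 - (1 - phi) / gamma))%:P) ^+ N1
    else
      (((1 - phi) / (1 - gamma) + s01 * (1 - (1 - phi) / (1 - gamma)))%:P
       + 'X * s01%:P) ^+ N0 *
      (s11%:P + 'X * ((1 - phi) / gamma + s11 * (1 - (1 - phi) / gamma))%:P) ^+ N1 in
  (\int[P]_(w in [set w | nones (Z w) = zeta])
      (s01 ^+ n01 x (Y w) * s11 ^+ n11 x (Y w))%:E =
   (gf`_zeta / ('C(N, zeta))%:R)%:E * P [set w | nones (Z w) = zeta])%E.
Proof.
move=> N0pos hphi hgamma hpg mZ mU exch unifU indep hpos Y N0 N1 gf.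
set A := [set w | nones (Z w) = zeta].
have mA : measurable A.
  have -> : A = \bigcup_(z in [set z | nones z = zeta]) [set w | Z w = z].
    apply/seteqP; split => w /=; first by move=> h; exists (Z w).
    by move=> [z /= hz hw]; rewrite /A /= hw.
  apply: fin_bigcup_measurable => //; exact: finite_finset.
have c01 b := @cth01 R phi gamma b hphi hgamma hpg.
pose B k b e := [set u : R | yf phi gamma b (x k) (cth phi gamma b <= u) == e].
have mB k b e : measurable (B k b e) by exact: measurable_bool.
have hPB k b e : P (U k @^-1` B k b e) = (qv phi gamma b (x k) e)%:E.
  by rewrite unifU // unif_bool.
pose pz z := fine (P [set w | Z w = z]).
have hpz z : P [set w | Z w = z] = (pz z)%:E by rewrite fineK // fin_num_measure.
pose E (i : {ffun 'I_N -> bool} * {ffun 'I_N -> bool}) :=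
  [set w | Z w = i.1 /\ forall k, B k (i.1 k) (i.2 k) (U k w)].
have mE i : measurable (E i).
  have -> : E i = [set w | Z w = i.1] `&`
      \bigcap_(k in [set: 'I_N]) (U k @^-1` B k (i.1 k) (i.2 k)).
    apply/seteqP; split => w /= [h1 h2]; split => // k; first by move=> _; exact: h2.
    exact: h2.
  apply: measurableI => //; apply: fin_bigcap_measurable; first exact: finite_finset.
  by move=> k _; have := mU k measurableT _ (mB k (i.1 k) (i.2 k)); rewrite setTI.
have PE i : P (E i) = (pz i.1 * \prod_k qv phi gamma (i.1 k) (x k) (i.2 k))%:E.
  rewrite /E (indep i.1 (fun k => B k (i.1 k) (i.2 k))) //.
  rewrite (eq_bigr (fun k => (qv phi gamma (i.1 k) (x k) (i.2 k))%:E)); last by move=> k _; exact: hPB.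
  by rewrite prodEFin hpz -EFinM.
pose G (e : {ffun 'I_N -> bool}) := s01 ^+ n01 x e * s11 ^+ n11 x e.
rewrite (@int_decomp R d T P _ A mA E mE (fun i => G i.2) (fun w => G (Y w))); last first.
  move=> w _; rewrite (bigD1 (Z w, Y w)) //= big1 ?addr0.
    rewrite indicE mem_set ?mulr1 //; split => // k.
    by rewrite /B /= /Y ffunE ycoordE.
  move=> [z e] /= hne; rewrite indicE memNset ?mulr0 //.
  move=> [hz he]; rewrite /= in hz he; subst z; move/negP: hne; apply; apply/eqP; congr pair.
  by apply/ffunP => k; rewrite /Y ffunE ycoordE; apply/esym/eqP/he.
have PEA i : P (E i `&` A) =
    (if nones i.1 == zeta then pz i.1 * \prod_k qv phi gamma (i.1 k) (x k) (i.2 k) else 0)%:E.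
  case: eqP => h.
    by rewrite setIidl ?PE //; move=> w [hz _]; rewrite /A /= hz h.
  rewrite (_ : _ `&` _ = set0) ?measure0 //; apply/seteqP; split => w //= [[hz _] hA].
  by apply: h; rewrite -hz.
rewrite (eq_bigr (fun i => (G i.2 * (if nones i.1 == zeta then
    pz i.1 * \prod_k qv phi gamma (i.1 k) (x k) (i.2 k) else 0))%:E)); last first.
  by move=> i _; rewrite PEA EFinM.
rewrite sumEFin.
have PA : P A = (\sum_z (if nones z == zeta then pz z else 0))%:E.
  have h1 : (\int[P]_(w in A) ((fun _ : T => (1:R)) w)%:E = P A)%E.
    by rewrite integral_cst // mul1e.
  rewrite -h1 (@int_decomp R d T P _ A mA (fun z => [set w | Z w = z]) mZ
     (fun _ => 1) (fun _ => 1)); last first.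
    move=> w _; rewrite (bigD1 (Z w)) //= big1 ?addr0.
      by rewrite indicE mem_set ?mulr1.
    move=> z hz; rewrite indicE memNset ?mulr0 // => /= hzw.
    by rewrite hzw eqxx in hz.
  rewrite -sumEFin; apply: eq_bigr => z _; rewrite mul1e; case: eqP => h.
    by rewrite setIidl ?hpz //; move=> w /= hz; rewrite /A /= hz h.
  rewrite (_ : _ `&` _ = set0) ?measure0 //; apply/seteqP; split => w //= [hz hA].
  by apply: h; rewrite -hz.
rewrite PA -EFinM; congr (_%:E).
have [w0 Aw0] : A !=set0.
  apply/set0P/eqP => h0; have : (0 < P A)%E := hpos.
  by rewrite h0 measure0 ltxx.
set z0 := Z w0.
have hp0 z : nones z = zeta -> pz z = pz z0.
  move=> hz; have [s ->] : exists s : {perm 'I_N}, z = [ffun k => z0 (s k)].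
    by apply: perm_exists; rewrite hz.
  by rewrite /pz -exch.
have hzN : (zeta <= N)%N.
  rewrite -Aw0 nones_card; apply: leq_trans (max_card _) _; by rewrite card_ord.
have hC : ('C(N, zeta))%:R != 0 :> R by rewrite pnatr_eq0 -lt0n bin_gt0.
have -> : \sum_z (if nones z == zeta then pz z else 0) = ('C(N, zeta))%:R * pz z0.
  rewrite -big_mkcond /= (eq_bigr (fun _ => pz z0)); last by move=> z /eqP; exact: hp0.
  by rewrite -(card_nones N zeta) natr_sum mulr_suml; apply: eq_bigr => z _; rewrite mul1r.
pose fk k j := \sum_(jj : bool) vv s01 s11 (x k) jj * qv phi gamma j (x k) jj.
have hgf : gf`_zeta = \sum_(z | nones z == zeta) \prod_k fk k (z k).
  transitivity ((\prod_(k < N) ((fk k false)%:P + 'X * (fk k true)%:P))`_zeta); last first.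
    rewrite coef_prod_lin; apply: eq_bigr => z _; apply: eq_bigr => k _.
    by case: (z k).
  apply: (congr1 (fun p : {poly R} => p`_zeta)).
  rewrite /gf /N0 /N1; case: (boolP (phi <= gamma)) => hle.
    rewrite -polyC1 -(prod_if _ _ x ((1 - phi / gamma + s11 * (phi / gamma))%:P
       + 'X * ((1 - phi) / gamma + s11 * (1 - (1 - phi) / gamma))%:P) (1%:P + 'X * s01%:P)).
    apply: eq_bigr => k _; rewrite /fk !big_bool /vv /qv /yf /cth hle.
    by case: (x k) => /=; congr (_%:P + 'X * _%:P); ring.
  rewrite -(prod_if _ _ x (s11%:P + 'X * ((1 - phi) / gamma + s11 * (1 - (1 - phi) / gamma))%:P)
     (((1 - phi) / (1 - gamma) + s01 * (1 - (1 - phi) / (1 - gamma)))%:P + 'X * s01%:P)).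
  apply: eq_bigr => k _; rewrite /fk !big_bool /vv /qv /yf /cth (negbTE hle).
  by case: (x k) => /=; congr (_%:P + 'X * _%:P); ring.
have hpair : \sum_(i : {ffun 'I_N -> bool} * {ffun 'I_N -> bool})
    G i.2 * (if nones i.1 == zeta then pz i.1 * \prod_k qv phi gamma (i.1 k) (x k) (i.2 k) else 0)
  = \sum_z \sum_e G e * (if nones z == zeta then pz z * \prod_k qv phi gamma (z k) (x k) (e k) else 0).
  by rewrite pair_bigA.
rewrite hpair (bigID (fun z => nones z == zeta)) /= [X in _ + X]big1 ?addr0; last first.
  by move=> z /negbTE hz; apply: big1 => e _; rewrite hz mulr0.
rewrite (eq_bigr (fun z : {ffun 'I_N -> bool} => pz z0 * \prod_(k < N) fk k (z k))); last first.
  move=> z /eqP hz; rewrite hz eqxx (hp0 z hz).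
  under eq_bigr do rewrite mulrCA.
  rewrite -mulr_sumr; congr (_ * _).
  rewrite /fk bigA_distr_bigA; apply: eq_bigr => e _; rewrite /G G_prod -big_split.
  by [].
rewrite -mulr_sumr hgf.
by rewrite [RHS]mulrA divfK // mulrC.
Qed.
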